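(* Let $(L,\vee,\wedge,0,1)$ be a complemented lattice with $0\ne1$ and consider the statements: (i) $x^+\vee y^+\le_1(x\wedge y)^+$ for all $x,y\in L$; (ii) for all $x,y\in L$, $x\le y$ implies $y^+\le_1x^+$; (iii) $(x\vee y)^+\le_1x^+\wedge y^+$ for all $x,y\in L$. Then (i) implies (ii), and (ii) is equivalent to (iii).
   Context: For $a\in L$, $a^+:=\{x\in L\mid a\vee x=1,\ a\wedge x=0\}$ (the set of all complements of $a$). For $A,B\subseteq L$: $A\vee B:=\{x\vee y\mid x\in A,y\in B\}$, $A\wedge B:=\{x\wedge y\mid x\in A,y\in B\}$, and $A\le_1B$ means that for every $x\in A$ there exists $y\in B$ with $x\le y$. *)

(* Defs.v *)
From HB Require Import structures.
From mathcomp Require Import all_boot all_order.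
Set Implicit Arguments. Unset Strict Implicit. Unset Printing Implicit Defensive.
Import Order.TTheory.
Local Open Scope order_scope.

Definition compls {d} {L : tbLatticeType d} (a : L) : L -> Prop :=
  fun x => a `|` x = \top /\ a `&` x = \bot.

Definition complemented {d} (L : tbLatticeType d) : Prop :=
  forall a : L, exists x, compls a x.

Definition setJoin {d} {L : tbLatticeType d} (A B : L -> Prop) : L -> Prop :=
  fun z => exists x y, A x /\ B y /\ z = x `|` y.

Definition setMeet {d} {L : tbLatticeType d} (A B : L -> Prop) : L -> Prop :=
  fun z => exists x y, A x /\ B y /\ z = x `&` y.

Definition le1 {d} {L : tbLatticeType d} (A B : L -> Prop) : Prop :=
  forall x, A x -> exists y, B y /\ x <= y.

(* Main.v *)
Require Import Defs.
From HB Require Import structures.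
From mathcomp Require Import all_boot all_order.
Import Order.TTheory.
Local Open Scope order_scope.

Theorem proposition3 (d : Order.disp_t) (L : tbLatticeType d)
  (Hcompl : complemented L) (H01 : (\bot : L) <> \top) :
  let P1 := forall x y : L, le1 (setJoin (compls x) (compls y)) (compls (x `&` y)) in
  let P2 := forall x y : L, x <= y -> le1 (compls y) (compls x) in
  let P3 := forall x y : L, le1 (compls (x `|` y)) (setMeet (compls x) (compls y)) in
  (P1 -> P2) /\ (P2 <-> P3).
Proof.
move=> P1 P2 P3; split; [|split].
- move=> h1 x y xy z zc.
  have [c cc] := Hcompl x.
  have [w [wc lw]] := h1 x y (c `|` z) (ex_intro _ c (ex_intro _ z (conj cc (conj zc erefl)))).
  have ex : x `&` y = x by apply/meet_idPl.
  rewrite ex in wc.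
  exists w; split => //; apply: le_trans lw; exact: leUr.
- move=> h2 x y z zc.
  have [a [ac za]] := h2 x (x `|` y) (leUl x y) z zc.
  have [b [bc zb]] := h2 y (x `|` y) (leUr y x) z zc.
  exists (a `&` b); split; first by exists a, b.
  by rewrite lexI za zb.
- move=> h3 x y xy z zc.
  have ex : x `|` y = y by apply/join_idPr.
  rewrite -ex in zc.
  have [w [[a [b [ac [bc ->]]]] zw]] := h3 x y z zc.
  exists a; split => //; apply: le_trans zw _; exact: leIl.
Qed.
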